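(* For all $x\ge y\ge 1$ and $n>x+y$, the maximum possible number of edges in any task-dependency graph produced by the $(x,y)$ edge-addition process on $n$ vertices is $\binom{n}{2}+1-\binom{x}{2}-\binom{y+1}{2}$.
   Context: A task-dependency graph is a finite directed acyclic graph (no loops, no multiple edges). A vertex is initial if it has in-degree $0$ and terminal if it has out-degree $0$ (an isolated vertex is both). An $(x,y)$ task-dependency graph has exactly $x$ initial and exactly $y$ terminal vertices. The $(x,y)$ edge-addition process on $n$ vertices: start with the empty graph on $\{1,\dots,n\}$ and repeatedly add, uniformly at random, an edge $(a,b)$ with $a<b$ not yet present; if an addition would cause fewer than $x$ initial vertices or fewer than $y$ terminal vertices, it is cancelled. The process halts if the graph after some edge addition is an $(x,y)$ task-dependency graph, or if no more edges can be added; the produced graph is the final graph (over all possible runs), not necessarily an $(x,y)$ task-dependency graph. *)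

(* Defs.v *)
From mathcomp Require Import all_boot.
Set Implicit Arguments. Unset Strict Implicit. Unset Printing Implicit Defensive.

(* Graphs on vertex set 'I_n (vertices 0..n-1, standing for 1..n), given as a
   set of directed edges (a,b); the process only ever adds edges with a < b,
   so every graph considered is a DAG without loops or multiple edges. *)
Definition graph (n : nat) := {set 'I_n * 'I_n}.

Definition initials n (G : graph n) : {set 'I_n} :=
  [set v | [forall u, (u, v) \notin G]].
Definition terminals n (G : graph n) : {set 'I_n} :=
  [set v | [forall w, (v, w) \notin G]].

Definition is_tdg (x y n : nat) (G : graph n) : bool :=
  (#|initials G| == x) && (#|terminals G| == y).

(* edge e may be added to G (not yet present, a<b, and the addition is not
   cancelled, i.e. keeps >= x initial and >= y terminal vertices) *)
Definition addable (x y n : nat) (G : graph n) (e : 'I_n * 'I_n) : bool :=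
  [&& (e.1 < e.2)%N, e \notin G, x <= #|initials (e |: G)|
    & y <= #|terminals (e |: G)|].

(* graphs at which the (x,y) edge-addition process is still running
   (it has not halted) along some run *)
Inductive running (x y n : nat) : graph n -> Prop :=
| running0 : running x y set0
| runningS G e : running x y G -> addable x y G e ->
    ~~ is_tdg x y (e |: G) -> running x y (e |: G).

Definition final (x y n : nat) (G : graph n) : Prop :=
  (exists G0 e, [/\ running x y G0, addable x y G0 e, G = e |: G0 & is_tdg x y G])
  \/ (running x y G /\ forall e, ~~ addable x y G e).

(* Main.v *)
Require Import Defs.
From mathcomp Require Import all_boot.
From mathcomp Require Import zify.
Set Implicit Arguments. Unset Strict Implicit. Unset Printing Implicit Defensive.

Definition D n (X : {set 'I_n}) := [set A : {set 'I_n} | A \subset X & #|A| == 2].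
Definition SS n (G : graph n) := [set A : {set 'I_n} | (#|A| == 2) &&
   [forall u, forall v, ((u \in A) && (v \in A)) ==> ((u, v) \notin G)]].
Definition okg n (G : graph n) := forall e, e \in G -> (e.1 < e.2)%N.

Lemma card_D n (X : {set 'I_n}) : #|D X| = 'C(#|X|, 2).
Proof. by rewrite /D cards_draws. Qed.

Lemma pair_eq n (A : {set 'I_n}) u v : #|A| == 2 -> u \in A -> v \in A -> u != v -> A = [set u; v].
Proof.
move=> /eqP cA uA vA uv; apply/eqP; rewrite eq_sym eqEcard cards2 uv cA leqnn andbT.
by apply/subsetP=> w; rewrite !inE => /orP[]/eqP->.
Qed.

Lemma SSP n (G : graph n) (A : {set 'I_n}) : reflect (#|A| == 2 /\ forall u v, u \in A -> v \in A -> (u, v) \notin G) (A \in SS G).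
Proof.
rewrite inE; apply: (iffP andP) => [[-> /forallP H]|[-> H]]; split => //.
  by move=> u v uA vA; have /forallP/(_ v) := H u; rewrite uA vA.
by apply/forallP=> u; apply/forallP=> v; apply/implyP=> /andP[]; apply: H.
Qed.

Lemma SS_edges n (G : graph n) : okg G -> #|G| + #|SS G| <= 'C(n, 2).
Proof.
move=> okG.
pose f (e : 'I_n * 'I_n) := [set e.1; e.2].
have injf : {in G &, injective f}.
  move=> [a b] [c d] /okG /= ab /okG /= cd; rewrite /f /= => E.
  have : a \in [set c; d] by rewrite -E !inE eqxx.
  have : b \in [set c; d] by rewrite -E !inE eqxx orbT.
  rewrite !inE => /orP[]/eqP eb /orP[]/eqP ea; subst; rewrite ?ltnn // in ab cd *.
  by have := ltn_trans ab cd; rewrite ltnn.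
rewrite -(card_in_imset injf) -[n in 'C(n, _)]card_ord -card_draws.
rewrite -cardsUI.
have -> : f @: G :&: SS G = set0.
  apply/setP=> A; rewrite in_setI in_set0; apply/negP=> /andP[/imsetP[e eG ->] /SSP[_ H]].
  by have := H e.1 e.2; rewrite !inE !eqxx orbT -surjective_pairing eG => /(_ isT isT).
rewrite cards0 addn0; apply: subset_leq_card; apply/subsetP=> A.
rewrite in_setU => /orP[/imsetP[e eG ->]|/SSP[/eqP cA _]]; rewrite inE ?cA //.
by rewrite cards2; have := okG e eG; rewrite ltn_neqAle => /andP[->].
Qed.

Lemma initialsU n (G : graph n) e : initials (e |: G) = initials G :\ e.2.
Proof.
apply/setP=> v; rewrite !inE; apply/forallP/andP.
  move=> H; split; last by apply/forallP=> u; have := H u; rewrite !inE negb_or => /andP[].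
  by apply/eqP=> ve; have := H e.1; rewrite ve !inE -surjective_pairing eqxx.
case=> ne /forallP H u; rewrite !inE negb_or H andbT; apply: contra ne => /eqP <- //.
Qed.

Lemma terminalsU n (G : graph n) e : terminals (e |: G) = terminals G :\ e.1.
Proof.
apply/setP=> v; rewrite !inE; apply/forallP/andP.
  move=> H; split; last by apply/forallP=> u; have := H u; rewrite !inE negb_or => /andP[].
  by apply/eqP=> ve; have := H e.2; rewrite ve !inE -surjective_pairing eqxx.
case=> ne /forallP H u; rewrite !inE negb_or H andbT; apply: contra ne => /eqP <- //.
Qed.

Lemma initials_sub n (G H : graph n) : G \subset H -> initials H \subset initials G.
Proof.
move=> /subsetP sGH; apply/subsetP=> v; rewrite !inE => /forallP Hv.
by apply/forallP=> u; apply: contra (Hv u); apply: sGH.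
Qed.

Lemma terminals_sub n (G H : graph n) : G \subset H -> terminals H \subset terminals G.
Proof.
move=> /subsetP sGH; apply/subsetP=> v; rewrite !inE => /forallP Hv.
by apply/forallP=> u; apply: contra (Hv u); apply: sGH.
Qed.

Lemma initials0 n : initials (set0 : graph n) = setT.
Proof. by apply/setP=> v; rewrite !inE; apply/forallP=> u; rewrite inE. Qed.
Lemma terminals0 n : terminals (set0 : graph n) = setT.
Proof. by apply/setP=> v; rewrite !inE; apply/forallP=> u; rewrite inE. Qed.

Lemma running_inv x y n (G : graph n) : x + y < n -> running x y G ->
  [/\ okg G, x <= #|initials G|, y <= #|terminals G| & (G == set0) || ~~ is_tdg x y G].
Proof.
move=> hn; elim=> [|G1 e _ [okG hx hy _] /and4P[e12 eG hx' hy'] ntdg].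
  rewrite initials0 terminals0 cardsT card_ord eqxx; split => //; try lia.
  by move=> e; rewrite inE.
split => //; last by rewrite ntdg orbT.
by move=> e'; rewrite in_setU1 => /orP[/eqP->|/okG].
Qed.

Lemma running_of x y n (G : graph n) : okg G -> x <= #|initials G| ->
  y <= #|terminals G| -> (x < #|initials G|) || (y < #|terminals G|) -> running x y G.
Proof.
move: {2}#|G| (leqnn #|G|) => m; elim: m G => [|m IH] G.
  by rewrite leqn0 cards_eq0 => /eqP -> *; constructor.
move=> Hm okG hx hy hlt.
case: (set_0Vmem G) => [->|[e eG]]; first constructor.
have sub : G :\ e \subset G by apply: subsetDl.
have hI := subset_leq_card (initials_sub sub).
have hT := subset_leq_card (terminals_sub sub).
rewrite -(setD1K eG); apply: runningS.
- apply: IH.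
  + by move: Hm; rewrite (cardsD1 e G) eG.
  + by move=> e' /setD1P[_ /okG].
  + exact: leq_trans hI.
  + exact: leq_trans hT.
  + by case/orP: hlt => h; apply/orP; [left|right]; apply: leq_trans h _.
- by rewrite /addable setD1K // okG //= setD11 hx hy.
- rewrite /is_tdg setD1K //; by apply/negP=> /andP[/eqP a /eqP b]; move: hlt; rewrite a b !ltnn.
Qed.

Definition Kset n (G : graph n) := initials G :&: terminals G.
Definition Zs n (G : graph n) := D (initials G) :|: D (terminals G) :|:
  [set A : {set 'I_n} | (#|A| == 2) && ~~ [disjoint A & Kset G]].

Lemma inI n (G : graph n) u v : v \in initials G -> (u, v) \notin G.
Proof. by rewrite inE => /forallP. Qed.
Lemma inT n (G : graph n) u v : u \in terminals G -> (u, v) \notin G.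
Proof. by rewrite inE => /forallP. Qed.

Lemma edge_pair n (G : graph n) (A : {set 'I_n}) u v : okg G -> #|A| == 2 ->
  u \in A -> v \in A -> (u, v) \in G -> A = [set u; v].
Proof.
move=> okG cA uA vA uvG; apply: pair_eq => //.
by have := okG _ uvG; rewrite ltn_neqAle => /andP[].
Qed.

Lemma Z_sub n (G : graph n) : okg G -> Zs G \subset SS G.
Proof.
move=> okG; apply/subsetP=> A; rewrite !in_setU => /orP[/orP[]|].
- rewrite inE => /andP[/subsetP sAI cA]; apply/SSP; split => // u v _ /sAI; exact: inI.
- rewrite inE => /andP[/subsetP sAT cA]; apply/SSP; split => // u v /sAT ? _; exact: inT.
rewrite inE => /andP[cA]; rewrite -setI_eq0 => /set0Pn[w] /setIP[wA]; rewrite /Kset => /setIP[wI wT].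
apply/SSP; split => // u v uA vA; apply/negP => uvG.
have := edge_pair okG cA uA vA uvG => EA; move: wA; rewrite EA !inE => /orP[]/eqP wu.
  by move: wT; rewrite wu => /(inT v); rewrite uvG.
by move: wI; rewrite wu => /(inI u); rewrite uvG.
Qed.

Lemma Z_card n (G : graph n) :
  'C(n, 2) + 'C(#|initials G| - #|Kset G|, 2) + 'C(#|terminals G| - #|Kset G|, 2)
  <= #|Zs G| + 'C(n - #|Kset G|, 2).
Proof.
set I := initials G; set T := terminals G; set K := Kset G.
set Y := D (~: K) :\: (D (I :\: K) :|: D (T :\: K)).
have sub1 : D (I :\: K) :|: D (T :\: K) \subset D (~: K).
  apply/subsetP=> A; rewrite !inE => /orP[]/andP[/subsetP s ->]; rewrite andbT;
  by apply/subsetP=> w /s; rewrite !inE => /andP[].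
have dis : D (I :\: K) :&: D (T :\: K) = set0.
  apply/setP=> A; rewrite !inE; apply/negP=> /andP[/andP[/subsetP s1 c]/andP[/subsetP s2 _]].
  have : A \subset set0.
    apply/subsetP=> w wA; have := s1 _ wA; have := s2 _ wA.
    move=> /setDP[wT wK] /setDP[wI _]; case/negP: wK; by rewrite /K /Kset inE wI wT.
  by move/subset_leq_card; rewrite cards0 (eqP c).
have cY : #|Y| + 'C(#|I| - #|K|, 2) + 'C(#|T| - #|K|, 2) = 'C(n - #|K|, 2).
  have cK : #|~: K| = n - #|K| by rewrite -[n in n - _](card_ord n) -(cardsC K) addKn.
  have cIK : #|I :\: K| = #|I| - #|K|.
    by rewrite cardsD /K /Kset setIA setIid.
  have cTK : #|T :\: K| = #|T| - #|K|.
    by rewrite cardsD /K /Kset setIC -setIA setIid.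
  rewrite -cIK -cTK -!card_D -cK /Y cardsD (setIidPr sub1).
  have := cardsUI (D (I :\: K)) (D (T :\: K)); rewrite dis cards0 addn0 => H; rewrite -addnA -H.
  rewrite subnK ?card_D //; rewrite -card_D; exact: subset_leq_card.
suff h : 'C(n, 2) <= #|Zs G| + #|Y| by rewrite -cY; lia.
apply: leq_trans (leq_card_setU _ _); rewrite -[n in 'C(n, _)]card_ord -card_draws.
apply: subset_leq_card; apply/subsetP=> A; rewrite inE => cA.
rewrite /Y /Zs !inE cA !andbT.
case: (boolP [disjoint A & K]) => dAK; last by rewrite !orbT.
rewrite /= orbF.
case: (boolP (A \subset I)) => sAI //=; case: (boolP (A \subset T)) => sAT //=.
rewrite negb_or; apply/andP; split; first (apply/andP; split).
- by apply: contra sAI => /subsetP s; apply/subsetP=> w /s; rewrite inE => /andP[].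
- by apply: contra sAT => /subsetP s; apply/subsetP=> w /s; rewrite inE => /andP[].
- by apply/subsetP=> w wA; rewrite inE; rewrite (disjointFr dAK wA).
Qed.

Lemma bin2D p q : 'C(p + q, 2) = 'C(p, 2) + p * q + 'C(q, 2).
Proof.
elim: p => [|p IH]; first by rewrite bin0n add0n mul0n.
rewrite addSn binS bin1 IH binS bin1; lia.
Qed.
Lemma bin2S p : 'C(p.+1, 2) = 'C(p, 2) + p.
Proof. by rewrite binS bin1. Qed.
Lemma bin2sq k : 'C(k, 2).*2 + k = k * k.
Proof. elim: k => [|k IH] //; rewrite bin2S; lia. Qed.

Lemma arith1 n x y k e z s g : 1 <= y -> y <= x -> x + y < n -> k <= y ->
  y - k - 1 <= e -> 'C(n, 2) + 'C(x - k, 2) + 'C(y - k, 2) <= z + 'C(n - k, 2) ->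
  z + e <= s -> g + s <= 'C(n, 2) -> g + 'C(x, 2) + 'C(y.+1, 2) <= 'C(n, 2) + 1.
Proof.
move=> h1 h2 h3 h4.
have [a ex] : exists a, x = k + a by exists (x - k); lia.
have [b ey] : exists b, y = k + b by exists (y - k); lia.
have [c en] : exists c, n = k + c by exists (n - k); lia.
subst x y n; rewrite bin2S !bin2D !addKn.
have hc : k + a + b + 1 <= c by lia.
have := leq_mul (leqnn k) hc; rewrite !mulnDr.
have := bin2sq k; lia.
Qed.

Lemma arith2 n x y k z s g : 1 <= y -> y <= x -> x + y < n -> k = x -> k = y ->
  'C(n, 2) <= z + 'C(n - k, 2) ->
  z <= s -> g + s <= 'C(n, 2) -> g + 'C(x, 2) + 'C(y.+1, 2) <= 'C(n, 2) + 1.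
Proof.
move=> h1 h2 h3 h4 h5; subst x y.
have [c en] : exists c, n = k + c by exists (n - k); lia.
subst n; rewrite bin2S !bin2D !addKn.
have hc : k + 1 <= c by lia.
have := leq_mul (leqnn k) hc; rewrite !mulnDr.
have := bin2sq k; lia.
Qed.

Lemma arith3 n x y k z s g : 1 <= y -> y <= x -> x + y < n -> y <= k -> k <= x ->
  'C(n, 2) + 'C(x - k, 2) <= z + 'C(n - k, 2) ->
  z <= s -> g + s <= 'C(n, 2) -> g + 'C(x, 2) + 'C(y.+1, 2) <= 'C(n, 2) + 1.
Proof.
move=> h1 h2 h3 h4 h5.
have [a ex] : exists a, x = k + a by exists (x - k); lia.
have [c en] : exists c, n = k + c by exists (n - k); lia.
have [d ec] : exists d, c = a + d by exists (c - a); lia.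
subst x n c; rewrite bin2S !bin2D !addKn.
have hc : y + 1 <= d by lia.
have := leq_mul h4 hc; rewrite !mulnDr.
rewrite !bin2D; have := bin2sq y; lia.
Qed.

Lemma lowerSS n (G : graph n) (E : {set {set 'I_n}}) : okg G -> E \subset SS G ->
  [disjoint E & Zs G] -> #|Zs G| + #|E| <= #|SS G|.
Proof.
move=> okG sE dE; rewrite -(cardsUI (Zs G) E).
have -> : Zs G :&: E = set0 by apply/eqP; rewrite setI_eq0 disjoint_sym.
rewrite cards0 addn0; apply: subset_leq_card; rewrite subUset sE Z_sub //.
Qed.

Lemma card_pairs n (c : 'I_n) (X : {set 'I_n}) : c \notin X -> #|[set [set c; t] | t in X]| = #|X|.
Proof.
move=> cX; apply: card_in_imset => t t' tX t'X E.
have : t \in [set c; t'] by rewrite -E !inE eqxx orbT.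
rewrite !inE => /orP[/eqP tc|/eqP //]; by move: tX; rewrite tc (negbTE cX).
Qed.

Lemma two_lt n (A : {set 'I_n}) : 1 < #|A| -> exists u v, [/\ u \in A, v \in A & (u < v)%N].
Proof.
case/card_gt1P=> u [v [uA vA uv]]; case: (ltngtP u v) => h.
- by exists u, v.
- by exists v, u.
- by move: uv; rewrite (val_inj h) eqxx.
Qed.

Lemma cardTK n (G : graph n) : #|terminals G :\: Kset G| = #|terminals G| - #|Kset G|.
Proof. by rewrite cardsD /Kset setIC -setIA setIid. Qed.
Lemma cardIK n (G : graph n) : #|initials G :\: Kset G| = #|initials G| - #|Kset G|.
Proof. by rewrite cardsD /Kset setIA setIid. Qed.
Lemma KsubT n (G : graph n) : #|Kset G| <= #|terminals G|.
Proof. by apply: subset_leq_card; apply: subsetIr. Qed.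
Lemma KsubI n (G : graph n) : #|Kset G| <= #|initials G|.
Proof. by apply: subset_leq_card; apply: subsetIl. Qed.

Lemma disjP (T : finType) (A B : {set T}) : (forall x, x \in A -> x \in B -> False) -> [disjoint A & B].
Proof. move=> H; rewrite -setI_eq0; apply/eqP/setP=> x; rewrite !inE; apply/negP=> /andP[]; exact: H. Qed.

Lemma extraB n (G : graph n) a b : okg G -> a \notin terminals G ->
  (forall w, (a, w) \in G -> w = b) ->
  [set [set a; t] | t in (terminals G :\: Kset G) :\ b] \subset SS G /\
  [disjoint [set [set a; t] | t in (terminals G :\: Kset G) :\ b] & Zs G].
Proof.
move=> okG aT hb; split.
- apply/subsetP=> A /imsetP[t /setD1P[tb /setDP[tT tK]] ->].
  have ta : t != a by apply/eqP => ta; move: aT; rewrite -ta tT.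
  apply/SSP; split; first by rewrite cards2 (eq_sym a t) ta.
  move=> u v; rewrite !in_set2 => /orP[]/eqP-> /orP[]/eqP->.
  + by apply/negP => /okG; rewrite ltnn.
  + by apply/negP => /hb tb'; rewrite tb' eqxx in tb.
  + exact: inT.
  + by apply/negP => /okG /=; rewrite ltnn.
- apply: disjP => A /imsetP[t /setD1P[tb /setDP[tT tK]] ->].
  rewrite /Zs !in_setU => /orP[/orP[]|].
  + rewrite inE => /andP[/subsetP s _]; have := s t; rewrite in_set2 eqxx orbT => /(_ isT) tI.
    by move: tK; rewrite /Kset in_setI tI tT.
  + rewrite inE => /andP[/subsetP s _]; have := s a; rewrite in_set2 eqxx => /(_ isT).
    by rewrite (negbTE aT).
  + rewrite inE => /andP[_]; move/negP; apply; apply: disjP => w; rewrite in_set2 => /orP[]/eqP->.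
    * by rewrite /Kset in_setI (negbTE aT) andbF.
    * by move/negP: tK.
Qed.

Lemma extraA n (G : graph n) a b : okg G -> b \notin initials G ->
  (forall w, (w, b) \in G -> w = a) ->
  [set [set b; i] | i in (initials G :\: Kset G) :\ a] \subset SS G /\
  [disjoint [set [set b; i] | i in (initials G :\: Kset G) :\ a] & Zs G].
Proof.
move=> okG bI ha; split.
- apply/subsetP=> A /imsetP[t /setD1P[ta /setDP[tI tK]] ->].
  have tb : t != b by apply/eqP => tb; move: bI; rewrite -tb tI.
  apply/SSP; split; first by rewrite cards2 (eq_sym b t) tb.
  move=> u v; rewrite !in_set2 => /orP[]/eqP-> /orP[]/eqP->.
  + by apply/negP => /okG; rewrite ltnn.
  + exact: inI.
  + by apply/negP => /ha ta'; rewrite ta' eqxx in ta.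
  + by apply/negP => /okG /=; rewrite ltnn.
- apply: disjP => A /imsetP[t /setD1P[ta /setDP[tI tK]] ->].
  rewrite /Zs !in_setU => /orP[/orP[]|].
  + rewrite inE => /andP[/subsetP s _]; have := s b; rewrite in_set2 eqxx => /(_ isT).
    by rewrite (negbTE bI).
  + rewrite inE => /andP[/subsetP s _]; have := s t; rewrite in_set2 eqxx orbT => /(_ isT) tT.
    by move: tK; rewrite /Kset in_setI tI tT.
  + rewrite inE => /andP[_]; move/negP; apply; apply: disjP => w; rewrite in_set2 => /orP[]/eqP->.
    * by rewrite /Kset in_setI (negbTE bI).
    * by move/negP: tK.
Qed.

Lemma upper x y n (G : graph n) : 1 <= y -> y <= x -> x + y < n -> final x y G ->
  #|G| + 'C(x, 2) + 'C(y.+1, 2) <= 'C(n, 2) + 1.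
Proof.
move=> hy hxy hn [[G0 [e [r0 /and4P[e12 eG0 hx0 hy0] EG tdg]]] | [r nadd]].
- have [okG0 hI0 hT0 h0] := running_inv hn r0.
  have okG : okg G by rewrite EG => e' /setU1P[->|/okG0].
  move: tdg; rewrite /is_tdg => /andP[/eqP cI /eqP cT].
  have sgE := SS_edges okG.
  have hZ := Z_card G.
  have kT := KsubT G.
  have IG : initials G = initials G0 :\ e.2 by rewrite EG initialsU.
  have TG : terminals G = terminals G0 :\ e.1 by rewrite EG terminalsU.
  rewrite cI cT in hZ kT.
  case: (boolP (e.1 \in terminals G0)) => h1.
  + have aT : e.1 \notin terminals G by rewrite TG setD11.
    have hb : forall w, (e.1, w) \in G -> w = e.2.
      move=> w; rewrite EG in_setU1 => /orP[/eqP <- //=|].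
      by move/negP: (inT w h1).
    have [ES ED] := extraB okG aT hb.
    have := lowerSS okG ES ED.
    rewrite card_pairs; last by apply: contra aT => /setD1P[_ /setDP[]].
    have := cardsD1 e.2 (terminals G :\: Kset G); rewrite cardTK cT => hc.
    move=> hl; apply: (arith1 hy hxy hn kT _ hZ hl sgE); move: hc; case: (_ \in _) => /= hc2; [by rewrite hc2 add1n subn1 | by rewrite hc2 add0n leq_subr].
  case: (boolP (e.2 \in initials G0)) => h2.
  + have bI : e.2 \notin initials G by rewrite IG setD11.
    have ha : forall w, (w, e.2) \in G -> w = e.1.
      move=> w; rewrite EG in_setU1 => /orP[/eqP <- //=|].
      by move/negP: (inI w h2).
    have [ES ED] := extraA okG bI ha.
    have := lowerSS okG ES ED.
    rewrite card_pairs; last by apply: contra bI => /setD1P[_ /setDP[]].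
    have := cardsD1 e.1 (initials G :\: Kset G); rewrite cardIK cI => hc.
    move=> hl; apply: (arith1 hy hxy hn kT _ hZ hl sgE); apply: leq_trans (_ : x - #|Kset G| - 1 <= _); first lia; move: hc; case: (_ \in _) => /= hc2; [by rewrite hc2 add1n subn1 | by rewrite hc2 add0n leq_subr].
  + exfalso.
    have I0 : initials G0 = initials G by rewrite IG; apply/setP=> v; rewrite in_setD1; case: eqP => // ->; rewrite (negbTE h2).
    have T0 : terminals G0 = terminals G by rewrite TG; apply/setP=> v; rewrite in_setD1; case: eqP => // ->; rewrite (negbTE h1).
    case/orP: h0 => [/eqP G00|].
      by move: h1; rewrite G00 terminals0 inE.
    by rewrite /is_tdg I0 T0 cI cT !eqxx.
- have [okG hI hT h0] := running_inv hn r.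
  have nadd' : forall u v : 'I_n, (u < v)%N -> (u, v) \notin G ->
      (#|initials G :\ v| < x) || (#|terminals G :\ u| < y).
    move=> u v uv nG; have := nadd (u, v).
    by rewrite /addable initialsU terminalsU /= uv nG /= negb_and -!ltnNge.
  have sgE := SS_edges okG.
  have hZ := Z_card G.
  have hZS := subset_leq_card (Z_sub okG).
  have kT := KsubT G.
  have kI := KsubI G.
  case: (ltngtP x #|initials G|) => cI; last 2 first.
  + by move: hI; rewrite leqNgt cI.
  + case: (ltngtP y #|terminals G|) => cT; last 2 first.
    * by move: hT; rewrite leqNgt cT.
    * exfalso; case/orP: h0 => [/eqP G00|].
        by move: cI; rewrite G00 initials0 cardsT card_ord => E; move: hn; rewrite E; lia.
      by rewrite /is_tdg -cI -cT !eqxx.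
    (* |I| = x, y < |T| *)
    have hTK : #|terminals G :\: Kset G| <= 1.
      rewrite leqNgt; apply/negP => /two_lt [u [v [/setDP[uT uK] /setDP[vT vK] uv]]].
      have := nadd' u v uv (inT v uT).
      have vI : v \notin initials G by apply: contra vK => vI; rewrite /Kset in_setI vI vT.
      have c1 : #|initials G :\ v| = #|initials G| by rewrite [RHS](cardsD1 v) (negbTE vI).
      have c2 : #|terminals G| = #|terminals G :\ u|.+1 by rewrite [LHS](cardsD1 u) uT.
      rewrite c1 => /orP[] q3; [by rewrite -cI ltnn in q3 | by move: cT; rewrite c2 ltnS leqNgt q3].
    move: hTK; rewrite cardTK => hTK.
    apply: (@arith3 n x y #|Kset G| #|Zs G| #|SS G| #|G|) => //; try lia.
    by apply: leq_trans _ hZ; rewrite -cI leq_addr.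
  case: (ltngtP y #|terminals G|) => cT; last 2 first.
  + by move: hT; rewrite leqNgt cT.
  + (* x < |I|, y = |T| *)
    have hIK : #|initials G :\: Kset G| <= 1.
      rewrite leqNgt; apply/negP => /two_lt [u [v [/setDP[uI uK] /setDP[vI vK] uv]]].
      have := nadd' u v uv (inI u vI).
      have uT : u \notin terminals G by apply: contra uK => uT; rewrite /Kset in_setI uI uT.
      have c1 : #|terminals G :\ u| = #|terminals G| by rewrite [RHS](cardsD1 u) (negbTE uT).
      have c2 : #|initials G| = #|initials G :\ v|.+1 by rewrite [LHS](cardsD1 v) vI.
      rewrite c1 => /orP[] q3; [by move: cI; rewrite c2 ltnS leqNgt q3 | by rewrite -cT ltnn in q3].
    move: hIK; rewrite cardIK => hIK.
    apply: (@arith2 n x y #|Kset G| #|Zs G| #|SS G| #|G|) => //; try lia.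
  exfalso.
  have [u [v [uI vI uv]]] : exists u v, [/\ u \in initials G, v \in initials G & (u < v)%N].
    by apply: two_lt; lia.
  have := nadd' u v uv (inI u vI).
  have c2 : #|initials G| = #|initials G :\ v|.+1 by rewrite [LHS](cardsD1 v) vI.
  have c1 : #|terminals G| <= #|terminals G :\ u|.+1 by rewrite [X in X <= _](cardsD1 u); case: (_ \in _).
  move=> /orP[] q3; [by move: cI; rewrite c2 ltnS leqNgt q3 | by move: (leq_trans cT c1); rewrite ltnS leqNgt q3].
Qed.

Lemma card_lt m n : m <= n -> #|[set v : 'I_n | (v < m)%N]| = m.
Proof.
move=> mn; have -> : [set v : 'I_n | (v < m)%N] = widen_ord mn @: [set: 'I_m].
  apply/setP=> v; rewrite inE; apply/idP/imsetP => [vm|[w _ ->] /=]; last exact: ltn_ord.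
  by exists (Ordinal vm) => //; apply: val_inj.
rewrite card_imset ?cardsT ?card_ord //; by move=> a b /(congr1 val) /= h; apply: val_inj.
Qed.

Lemma card_ge m n : m <= n -> #|[set v : 'I_n | m <= v]| = n - m.
Proof.
move=> mn; have := cardsC [set v : 'I_n | (v < m)%N]; rewrite card_lt // card_ord.
have -> : ~: [set v : 'I_n | (v < m)%N] = [set v : 'I_n | m <= v].
  by apply/setP=> v; rewrite !inE -leqNgt.
lia.
Qed.

Lemma two_SS n (G : graph n) : okg G -> 'C(n, 2) <= #|G| + #|SS G|.
Proof.
move=> okG.
pose f (e : 'I_n * 'I_n) := [set e.1; e.2].
have injf : {in G &, injective f}.
  move=> [a b] [c d] /okG /= ab /okG /= cd; rewrite /f /= => E.
  have : a \in [set c; d] by rewrite -E !inE eqxx.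
  have : b \in [set c; d] by rewrite -E !inE eqxx orbT.
  rewrite !inE => /orP[]/eqP eb /orP[]/eqP ea; subst; rewrite ?ltnn // in ab cd *.
  by have := ltn_trans ab cd; rewrite ltnn.
rewrite -(card_in_imset injf) -[n in 'C(n, _)]card_ord -card_draws.
apply: leq_trans (leq_card_setU _ _); apply: subset_leq_card; apply/subsetP=> A.
rewrite inE => cA; rewrite in_setU; case: (boolP (A \in f @: G)) => //= h.
apply/SSP; split => // u v uA vA; apply/negP => uvG; case/negP: h.
by rewrite (edge_pair okG cA uA vA uvG); apply: (imset_f f uvG).
Qed.

Definition cG x y n : graph n := [set p : 'I_n * 'I_n | [&& (p.1 < p.2)%N, x <= p.2,
  (p.1 < n - y)%N & (p.1 == n - y - 1 :> nat) ==> (p.2 == n - 1 :> nat)]].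

Lemma lower x y n : 1 <= y -> y <= x -> x + y < n ->
  exists G : graph n, final x y G /\ #|G| + 'C(x, 2) + 'C(y.+1, 2) = 'C(n, 2) + 1.
Proof.
move=> hy hxy hn.
have ha : n - y - 1 < n by lia.
have hb : n - 1 < n by lia.
have h0 : 0 < n by lia.
pose a0 := Ordinal ha; pose b0 := Ordinal hb; pose z0 := Ordinal h0.
set G := cG x y n.
have okG : okg G by move=> e; rewrite inE => /andP[].
have IG : initials G = [set v : 'I_n | (v < x)%N].
  apply/setP=> v; rewrite !inE; apply/forallP/idP => [H|vx u].
    rewrite ltnNge; apply/negP=> xv; have := H z0; rewrite inE /= xv.
    have -> : (0 < v)%N by lia.
    have -> : (0 < n - y)%N by lia.
    by case: eqP => [?|_] //=; lia.
  by rewrite inE; apply/negP => /and4P[_ /= xv _ _]; lia.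
have TG : terminals G = [set v : 'I_n | n - y <= v].
  apply/setP=> v; rewrite !inE; apply/forallP/idP => [H|vx w].
    rewrite leqNgt; apply/negP=> vy; have := H b0; rewrite inE /= vy eqxx implybT.
    have -> : (v < n - 1)%N by lia.
    have -> : x <= n - 1 by lia.
    done.
  by rewrite inE; apply/negP => /and4P[_ _ /= vy _]; lia.
have cI : #|initials G| = x by rewrite IG card_lt //; lia.
have cT : #|terminals G| = y by rewrite TG card_ge; lia.
have abG : (a0, b0) \in G.
  rewrite inE /= !eqxx implybT.
  have -> : (n - y - 1 < n - 1)%N by lia.
  have -> : x <= n - 1 by lia.
  have -> : (n - y - 1 < n - y)%N by lia.
  done.
set G0 := G :\ (a0, b0).
have sub0 : G0 \subset G by apply: subsetDl.
have okG0 : okg G0 by move=> e /setD1P[_ /okG].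
have aT0 : a0 \in terminals G0.
  rewrite inE; apply/forallP=> w; rewrite in_setD1 negb_and negbK.
  case: (boolP ((a0, w) \in G)); rewrite ?orbT //.
  rewrite inE /= eqxx implyTb => /and4P[_ _ _ /eqP wn]; rewrite orbF.
  by apply/eqP; congr pair; apply: val_inj.
have aT : a0 \notin terminals G by rewrite TG inE /= -ltnNge; lia.
have cT0 : y < #|terminals G0|.
  rewrite -cT; apply: leq_trans (_ : #|a0 |: terminals G| <= _).
    by rewrite cardsU1 aT.
  apply: subset_leq_card; rewrite subUset sub1set aT0 andTb; exact: terminals_sub.
have cI0 : x <= #|initials G0|.
  by rewrite -cI; apply: subset_leq_card; exact: initials_sub.
have r0 : running x y G0 by apply: running_of => //; [lia | rewrite cT0 orbT].
have fin : final x y G.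
  left; exists G0, (a0, b0); split => //.
  - rewrite /addable /G0 setD1K // setD11 cI cT !leqnn !andbT /=; lia.
  - by rewrite /G0 setD1K.
  - by rewrite /is_tdg cI cT !eqxx.
exists G; split => //.
apply/eqP; rewrite eqn_leq upper //=.
have hS := two_SS okG.
set I0 := [set v : 'I_n | (v < x)%N].
set T1 := a0 |: [set v : 'I_n | n - y <= v].
have cT1 : #|T1| = y.+1 by rewrite cardsU1 -TG aT cT.
have pT1 : [set a0; b0] \in D T1.
  rewrite inE cards2.
  have -> : a0 != b0 by apply/eqP => /(congr1 val) /=; lia.
  rewrite andbT; apply/subsetP => w; rewrite in_set2 => /orP[]/eqP ->; rewrite !inE ?eqxx //=.
  by rewrite orbC; apply/orP; left; lia.
have sS : SS G \subset D I0 :|: (D T1 :\ [set a0; b0]).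
  apply/subsetP=> A /SSP[cA H].
  have [u [v [uA vA uv]]] : exists u v, [/\ u \in A, v \in A & (u < v)%N] by apply: two_lt; rewrite (eqP cA).
  have EA : A = [set u; v] by apply: pair_eq => //; rewrite neq_ltn uv.
  have := H u v uA vA; rewrite inE /= uv /=.
  case: (leqP x v) => [xv|vx] /=; last first.
    move=> _; apply/setUP; left; rewrite inE EA cards2 neq_ltn uv andbT.
    by apply/subsetP=> w; rewrite in_set2 => /orP[]/eqP ->; rewrite inE /=; lia.
  case: (ltnP u (n - y)) => [uy|uy] /=; last first.
    move=> _; apply/setUP; right; rewrite in_setD1 EA; apply/andP; split.
      apply/negP => /eqP E2; have : a0 \in [set u; v] by rewrite E2 in_set2 eqxx.
      by rewrite in_set2 => /orP[]/eqP/(congr1 val) /=; lia.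
    rewrite inE cards2 neq_ltn uv andbT; apply/subsetP=> w; rewrite in_set2 => /orP[]/eqP ->;
    by rewrite !inE; apply/orP; right; lia.
  case: eqP => [ua|ua] //=; case: eqP => [vb|vb] //= _.
  apply/setUP; right; rewrite in_setD1 EA; apply/andP; split.
    apply/negP => /eqP E2; have : b0 \in [set u; v] by rewrite E2 in_set2 eqxx orbT.
    by rewrite in_set2 => /orP[]/eqP/(congr1 val) /=; lia.
  rewrite inE cards2 neq_ltn uv andbT; apply/subsetP=> w; rewrite in_set2 => /orP[]/eqP ->.
    by rewrite !inE; apply/orP; left; apply/eqP; apply: val_inj.
  by rewrite !inE; apply/orP; right; lia.
have := subset_leq_card sS => hS2.
have hU : #|D I0 :|: (D T1 :\ [set a0; b0])| <= #|D I0| + #|D T1 :\ [set a0; b0]| := leq_card_setU _ _.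
have hD := cardsD1 [set a0; b0] (D T1); rewrite pT1 card_D cT1 in hD.
have cIx : #|I0| = x by rewrite /I0 card_lt; lia.
rewrite card_D cIx in hU; move: hD => /= hD.
rewrite addn1 hD add1n addnS ltnS; apply: leq_trans hS _.
by rewrite -addnA leq_add2l; apply: leq_trans hS2 hU.
Qed.

Theorem mainTheorem14 (x y n : nat) :
  1 <= y -> y <= x -> x + y < n ->
  (exists G : graph n, final x y G /\
     #|G| + 'C(x, 2) + 'C(y.+1, 2) = 'C(n, 2) + 1) /\
  (forall G : graph n, final x y G ->
     #|G| + 'C(x, 2) + 'C(y.+1, 2) <= 'C(n, 2) + 1).
Proof.
move=> hy hxy hn; split; first exact: lower.
by move=> G; apply: upper.
Qed.
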